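(* Let $\mathcal T$ be a $2$-deterministic $3$-automaton and let $x,y$ be infinite words such that the run $\gamma=q_0\xrightarrow{x,y|z}\cdots$ of $\mathcal T$ is accepting. If $y$ is normal, then there is a constant $K$ depending only on $\mathcal T$ such that for every factorization of $\gamma$ as a finite run $q_0\xrightarrow{u_1,v_1|w_1}q_1$ followed by an infinite run from $q_1$ with label $(x_1,y_1|z_1)$, with $|u_1|$ long enough, one has $|v_1|\le K|u_1|$.
   Context: A $3$-automaton is $\langle Q,A,\delta,I\rangle$ with finite state set $Q$, transitions $\delta\subseteq Q\times(A\cup\{\varepsilon\})^3\times Q$, initial states $I$. A run is a sequence of consecutive transitions; its label is the componentwise concatenation of transition labels; $p\xrightarrow{u_1,u_2|u_3}q$ denotes a finite run with label $(u_1,u_2,u_3)$. An infinite run is accepting if it starts in an initial state and all three label components are infinite. The automaton is $2$-deterministic if $I=\{q_0\}$ is a singleton and, for any two transitions from the same state with labels $(\alpha_1,\alpha_2,\alpha_3)$, $(\alpha'_1,\alpha'_2,\alpha'_3)$: $\alpha_j=\varepsilon$ for some $j\le2$ implies $\alpha'_j=\varepsilon$, and $\alpha_1=\alpha'_1,\alpha_2=\alpha'_2$ implies $\alpha_3=\alpha'_3$ and equal target states. It is assumed that no transition has both of its first two label components empty. An infinite word $y$ is normal if for every $\ell\ge1$ and $u\in A^\ell$, the number of occurrences of $u$ in $y[1..n]$ at positions $i\equiv1\bmod\ell$, divided by $n/\ell$, tends to $|A|^{-\ell}$. *)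

(* Defs.v *)
From mathcomp Require Import all_boot all_order all_algebra.
Set Implicit Arguments. Unset Strict Implicit. Unset Printing Implicit Defensive.
Import Order.TTheory GRing.Theory Num.Theory.

(* A transition of a 3-automaton over alphabet A with states Q:
   (source, (alpha1, alpha2, alpha3), target); None encodes epsilon. *)
Definition trans (A Q : finType) : finType :=
  (Q * (option A * option A * option A) * Q)%type.

Section Aut.
Variables (A Q : finType).

Definition src (t : trans A Q) : Q := t.1.1.
Definition tgt (t : trans A Q) : Q := t.2.
Definition lab1 (t : trans A Q) : option A := t.1.2.1.1.
Definition lab2 (t : trans A Q) : option A := t.1.2.1.2.
Definition lab3 (t : trans A Q) : option A := t.1.2.2.

Definition two_deterministic (delta : {set trans A Q}) (I : {set Q}) : Prop :=
  (exists q0, I = [set q0]) /\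
  forall t t', t \in delta -> t' \in delta -> src t = src t' ->
    (lab1 t = None -> lab1 t' = None) /\
    (lab2 t = None -> lab2 t' = None) /\
    (lab1 t = lab1 t' -> lab2 t = lab2 t' -> lab3 t = lab3 t' /\ tgt t = tgt t').

Definition no_double_eps (delta : {set trans A Q}) : Prop :=
  forall t, t \in delta -> ~ (lab1 t = None /\ lab2 t = None).

Definition is_run (delta : {set trans A Q}) (rho : nat -> trans A Q) : Prop :=
  forall i, rho i \in delta /\ tgt (rho i) = src (rho i.+1).

Definition comp_len (lab : trans A Q -> option A) (rho : nat -> trans A Q)
  (n : nat) : nat := \sum_(i < n) (lab (rho i) != None).

(* The component lab of the label of rho is the infinite word x
   (componentwise concatenation, and the component is infinite). *)
Definition comp_label (lab : trans A Q -> option A) (rho : nat -> trans A Q)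
  (x : nat -> A) : Prop :=
  (forall i a, lab (rho i) = Some a -> a = x (comp_len lab rho i)) /\
  (forall k, exists n, k < comp_len lab rho n).

Definition accepting_run (delta : {set trans A Q}) (I : {set Q})
  (rho : nat -> trans A Q) (x y z : nat -> A) : Prop :=
  is_run delta rho /\ src (rho 0) \in I /\
  comp_label lab1 rho x /\ comp_label lab2 rho y /\ comp_label lab3 rho z.
End Aut.

(* Number of occurrences of u (|u| = l) in y[1..n] at positions i = 1 mod l
   (0-indexed: blocks y[k l .. k l + l - 1] with k l + l <= n). *)
Definition block_count (A : finType) (y : nat -> A) (l : nat) (u : l.-tuple A)
  (n : nat) : nat :=
  \sum_(k < n %/ l) [forall j : 'I_l, y (k * l + j) == tnth u j].

Local Open Scope ring_scope.
Definition normal (A : finType) (y : nat -> A) : Prop :=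
  forall (l : nat) (u : l.-tuple A), (0 < l)%N ->
    forall eps : rat, 0 < eps -> exists N : nat, forall n : nat, (N <= n)%N ->
      `| (block_count y u n)%:R / (n%:R / l%:R) - (#|A|%:R ^+ l)^-1 | < eps.

(* Main.v *)
Require Import Defs.
From mathcomp Require Import all_boot all_order all_algebra.
From mathcomp Require Import zify ring lra.
From Stdlib Require Import ClassicalEpsilon.
Set Implicit Arguments. Unset Strict Implicit. Unset Printing Implicit Defensive.

Lemma sum_tupleS (T : finType) m (F : seq T -> nat) :
  \sum_(u : m.+1.-tuple T) F u = \sum_(a : T) \sum_(t : m.-tuple T) F (a :: t).
Proof.
rewrite pair_big /=.
rewrite (reindex (fun p : T * m.-tuple T => [tuple of p.1 :: p.2])) /=; first by [].
apply: onW_bij.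
exists (fun u : m.+1.-tuple T => (thead u, [tuple of behead u])).
- by case=> a t /=; congr pair; apply: val_inj.
- by move=> u; rewrite [RHS]tuple_eta; apply: val_inj.
Qed.

Section Aut.
Variables (A Q : finType) (delta : {set trans A Q}).
Hypothesis det : forall t t', t \in delta -> t' \in delta -> src t = src t' ->
    (lab1 t = None -> lab1 t' = None) /\
    (lab2 t = None -> lab2 t' = None) /\
    (lab1 t = lab1 t' -> lab2 t = lab2 t' -> lab3 t = lab3 t' /\ tgt t = tgt t').

Definition ystep (q : Q) (a : A) : option Q :=
  if [pick t in delta | (src t == q) && (lab1 t == None) && (lab2 t == Some a)]
  is Some t then Some (tgt t) else None.

Lemma ystepE t a : t \in delta -> lab1 t = None -> lab2 t = Some a ->
  ystep (src t) a = Some (tgt t).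
Proof.
move=> tD l1 l2; rewrite /ystep; case: pickP.
- move=> t' /andP[t'D /andP[/andP[/eqP s /eqP l1'] /eqP l2']].
  have [_ [_ H]] := det t'D tD s.
  by have [_ ->] := H (etrans l1' (esym l1)) (etrans l2' (esym l2)).
- by move=> /(_ t); rewrite tD eqxx l1 l2 eqxx.
Qed.

Lemma ystep_none q a t : t \in delta -> src t = q -> lab1 t != None ->
  ystep q a = None.
Proof.
move=> tD st l1; rewrite /ystep; case: pickP => //.
move=> t' /andP[t'D /andP[/andP[/eqP s /eqP l1'] _]].
have [H _] := det t'D tD (etrans s (esym st)).
by rewrite (H l1') in l1.
Qed.

Fixpoint exits (q : Q) (s : seq A) : bool :=
  match s with
  | [::] => [exists t in delta, (src t == q) && (lab1 t != None)]
  | a :: s' => if ystep q a is Some r then exits r s' else false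
  end.

Definition live q : Prop := exists s, exits q s.
Definition liveb q : bool := if excluded_middle_informative (live q) then true else false.

Fixpoint stays (q : Q) (s : seq A) : bool :=
  match s with
  | [::] => liveb q
  | a :: s' => if ystep q a is Some r then stays r s' else false
  end.

Definition f m q := \sum_(u : m.-tuple A) nat_of_bool (stays q (tval u)).

Lemma f_S m q : f m.+1 q = \sum_(a : A) (if ystep q a is Some r then f m r else 0).
Proof.
rewrite /f (@sum_tupleS _ _ (fun s => nat_of_bool (stays q s))).
apply: eq_bigr => a _ /=; case: ystep => [r|] //.
by rewrite big1.
Qed.

Lemma stays_live q s : stays q s -> live q.
Proof.
elim: s q => [|a s IH] q /=.
  by rewrite /liveb; case: excluded_middle_informative.
case E: ystep => [r|] // /IH [s' Hs'].
by exists (a :: s'); rewrite /= E.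
Qed.

Lemma f_nonlive q m : ~ live q -> f m q = 0.
Proof.
move=> nl; rewrite /f big1 // => u _.
by case E: stays => //; case: nl; apply: stays_live E.
Qed.

Lemma f_le0 q : f 0 q <= 1.
Proof.
rewrite /f; apply: leq_trans (_ : \sum_(u : 0.-tuple A) 1 <= 1).
  by apply: leq_sum => u _; case: stays.
by rewrite sum1_card card_tuple expn0.
Qed.

Lemma f_grow M H : (forall q, f M q <= H) -> forall j q, f (M + j) q <= #|A| ^ j * H.
Proof.
move=> HM; elim=> [|j IH] q; first by rewrite addn0 expn0 mul1n.
rewrite addnS f_S.
apply: leq_trans (_ : \sum_(a : A) #|A| ^ j * H <= _).
  by apply: leq_sum => a _; case: ystep.
by rewrite sum_nat_const expnS mulnA.
Qed.

Lemma f_exit M H : 0 < #|A| -> (forall q, f M q <= H) ->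
  forall s q, exits q s -> f (M + size s).+1 q <= (#|A| ^ (size s).+1 - 1) * H.
Proof.
move=> A0 HM; elim=> [|a s IH] q /=.
  case/existsP=> t /andP[tD /andP[/eqP st l1]].
  rewrite f_S big1 // => a _.
  by rewrite (ystep_none a tD st l1).
case E: ystep => [r|] // Hr.
rewrite addnS f_S (bigD1 a) //= E.
have h1 := IH r Hr.
have h2 : \sum_(b | b != a) (if ystep q b is Some r' then f (M + size s).+1 r' else 0)
   <= #|predC1 a| * (#|A| ^ (size s).+1 * H).
  rewrite -sum_nat_const; apply: leq_sum => b _.
  case: ystep => [r'|] //; rewrite -addnS; exact: f_grow.
rewrite cardC1 in h2.
apply: leq_trans (leq_add h1 h2) _.
set X := #|A| ^ (size s).+1.
have X1 : 0 < X by rewrite expn_gt0 A0.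
rewrite [#|A| ^ _]expnS -/X.
rewrite mulnA -mulnDl leq_mul2r; apply/orP; right.
move: A0 X1; set L := #|A|; clearbody X L => A0 X1.
nia.
Qed.

Lemma exD : exists D, forall q, live q -> exists s, exits q s /\ size s <= D.
Proof.
suff [D HD] : exists D, forall q, q \in enum Q -> live q -> exists s, exits q s /\ size s <= D.
  by exists D => q; apply: HD; rewrite mem_enum.
elim: (enum Q) => [|q0 l [D HD]]; first by exists 0.
case: (excluded_middle_informative (live q0)) => [[s0 Hs0]|nl].
- exists (maxn D (size s0)) => q; rewrite inE => /orP[/eqP->|ql] lq.
    by exists s0; split => //; apply: leq_maxr.
  by case: (HD q ql lq) => s [Hs sz]; exists s; split => //; apply: leq_trans sz (leq_maxl _ _).
- exists D => q; rewrite inE => /orP[/eqP->|ql] //; exact: HD.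
Qed.

Lemma f_step D M H : 0 < #|A| -> (forall q, live q -> exists s, exits q s /\ size s <= D) ->
  (forall q, f M q <= H) -> forall q, f (M + D.+1) q <= (#|A| ^ D.+1 - 1) * H.
Proof.
move=> A0 HD HM q.
case: (excluded_middle_informative (live q)) => [lq|nl]; last by rewrite f_nonlive.
have [s [Hs sz]] := HD q lq.
have HM' : forall q, f (M + (D - size s)) q <= #|A| ^ (D - size s) * H.
  by move=> q'; apply: f_grow.
have := f_exit A0 HM' Hs.
have -> : (M + (D - size s) + size s).+1 = M + D.+1 by lia.
move=> h; apply: leq_trans h _.
rewrite mulnA leq_mul2r; apply/orP; right.
have -> : #|A| ^ D.+1 = #|A| ^ (size s).+1 * #|A| ^ (D - size s) by rewrite -expnD; congr (_ ^ _); lia.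
have : 0 < #|A| ^ (D - size s) by rewrite expn_gt0 A0.
have : 0 < #|A| ^ (size s).+1 by rewrite expn_gt0 A0.
move: (#|A| ^ (D - size s)) (#|A| ^ (size s).+1) => a b; nia.
Qed.

Lemma f_pow D : 0 < #|A| -> (forall q, live q -> exists s, exits q s /\ size s <= D) ->
  forall k q, f (k * D.+1) q <= (#|A| ^ D.+1 - 1) ^ k.
Proof.
move=> A0 HD; elim=> [|k IH] q; first by rewrite mul0n expn0 f_le0.
rewrite mulSnr expnS; exact: f_step.
Qed.

Definition Bp m (u : m.-tuple A) : bool := [exists q, stays q u].

Lemma Bp_card m : \sum_(u : m.-tuple A) (Bp u : nat) <= \sum_(q : Q) f m q.
Proof.
rewrite /f exchange_big /=; apply: leq_sum => u _.
rewrite /Bp; case: existsP => [[q Hq]|] //=.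
by rewrite (bigD1 q) //= Hq.
Qed.
End Aut.

Lemma bern x k : x ^ k * (x + k.+1) <= (x + 1) ^ k.+1.
Proof.
elim: k => [|k IH]; first by rewrite expn0 mul1n expn1.
rewrite expnS [(x + 1) ^ k.+2]expnS.
apply: leq_trans (_ : x ^ k * ((x + 1) * (x + k.+1)) <= _).
  move: (x ^ k) => X. nia.
by rewrite mulnCA leq_mul2l IH orbT.
Qed.

Section Run.
Variables (A Q : finType) (delta : {set trans A Q}).
Hypothesis det : forall t t', t \in delta -> t' \in delta -> src t = src t' ->
    (lab1 t = None -> lab1 t' = None) /\
    (lab2 t = None -> lab2 t' = None) /\
    (lab1 t = lab1 t' -> lab2 t = lab2 t' -> lab3 t = lab3 t' /\ tgt t = tgt t').
Hypothesis nde : no_double_eps delta.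
Variables (rho : nat -> trans A Q) (y : nat -> A).
Hypothesis Hrun : is_run delta rho.
Hypothesis Hy : forall i a, lab2 (rho i) = Some a -> a = y (comp_len (@lab2 A Q) rho i).
Hypothesis Hx : forall k, exists n, k < comp_len (@lab1 A Q) rho n.

Definition st i := src (rho i).
Definition jpos i := comp_len (@lab2 A Q) rho i.

Lemma clenS lab n : comp_len lab rho n.+1 = comp_len lab rho n + (lab (rho n) != None).
Proof. by rewrite /comp_len big_ord_recr. Qed.

Lemma clen_nat lab n : comp_len lab rho n = \sum_(0 <= i < n) (lab (rho i) != None).
Proof. by rewrite big_mkord. Qed.

Lemma clen_le lab n : comp_len lab rho n <= n.
Proof. elim: n => [|n IH]; first by rewrite /comp_len big_ord0. rewrite clenS; case: eqP => /=; lia. Qed.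

Lemma clen_mono lab n d : comp_len lab rho n <= comp_len lab rho (n + d).
Proof. elim: d => [|d IH]; first by rewrite addn0. rewrite addnS clenS; lia. Qed.

Lemma clen_add lab n d : comp_len lab rho (n + d) <= comp_len lab rho n + d.
Proof. elim: d => [|d IH]; first by rewrite !addn0. rewrite addnS clenS; case: eqP => /=; lia. Qed.

Lemma yonly_l2 i : lab1 (rho i) = None -> lab2 (rho i) != None.
Proof.
move=> h; have [tD _] := Hrun i; have := nde tD.
by case: (lab2 (rho i)) => // H; case: H.
Qed.

Lemma yonly_step i : lab1 (rho i) = None -> ystep delta (st i) (y (jpos i)) = Some (st i.+1).
Proof.
move=> h; have [tD tg] := Hrun i.
have := yonly_l2 h; case E: (lab2 (rho i)) => [a|] // _.
rewrite /st -tg -(Hy E); exact: ystepE.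
Qed.

Lemma live_run j : live delta (st j).
Proof.
have aux : forall d j, comp_len (@lab1 A Q) rho j < comp_len (@lab1 A Q) rho (j + d) ->
    live delta (st j).
  elim=> [|d IH] j0; first by rewrite addn0 ltnn.
  case E: (lab1 (rho j0)) => [a|].
    move=> _; exists [::]; apply/existsP; exists (rho j0).
    by rewrite /st eqxx E (proj1 (Hrun j0)).
  rewrite -addSnnS => h.
  have : comp_len (@lab1 A Q) rho j0.+1 < comp_len (@lab1 A Q) rho (j0.+1 + d).
    by rewrite clenS E /= addn0.
  move=> /IH [s Hs]; exists (y (jpos j0) :: s).
  by rewrite /= yonly_step.
have [n Hn] := Hx (comp_len (@lab1 A Q) rho j).
apply: (aux (n - j)).
have [jn|nj] := leqP j n; first by rewrite subnKC.
have := clen_mono (@lab1 A Q) n (j - n); rewrite subnKC ?(ltnW nj) //; lia.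
Qed.

Lemma liveb_run j : liveb delta (st j).
Proof. rewrite /liveb; case: excluded_middle_informative => // nl; exfalso; exact: (nl (live_run j)). Qed.

Lemma pure r i0 : (forall t, t < r -> lab1 (rho (i0 + t)) = None) ->
  stays delta (st i0) [seq y (jpos i0 + t) | t <- iota 0 r] /\ jpos (i0 + r) = jpos i0 + r.
Proof.
elim: r i0 => [|r IH] i0 H; first by split; rewrite ?addn0 //= liveb_run.
have h0 : lab1 (rho i0) = None by have := H 0 isT; rewrite addn0.
have js : jpos i0.+1 = (jpos i0).+1 by rewrite /jpos clenS (yonly_l2 h0) addn1.
have H' : forall t, t < r -> lab1 (rho (i0.+1 + t)) = None.
  by move=> t ht; rewrite addSnnS; exact: H.
have [IH1 IH2] := IH i0.+1 H'.
split; last by rewrite -addSnnS IH2 js addSnnS.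
rewrite /= addn0 yonly_step //.
rewrite -[1]addn0 iotaDl -map_comp.
move: IH1; congr (is_true (stays _ _ _)); apply: eq_map => t /=.
by rewrite js addnA addn1.
Qed.

Lemma ident (g : nat -> nat) n :
  \sum_(0 <= i < n) (lab2 (rho i) != None) * g (jpos i) = \sum_(0 <= j < jpos n) g j.
Proof.
elim: n => [|n IH]; first by rewrite /jpos /comp_len big_ord0 !big_geq.
rewrite big_nat_recr //= IH.
have -> : jpos n.+1 = jpos n + (lab2 (rho n) != None) by exact: clenS.
case: eqP => _ /=; first by rewrite addn0 mul0n addn0.
by rewrite addn1 big_nat_recr //= mul1n.
Qed.

Lemma block_sum m (g : nat -> nat) K : 0 < m ->
  \sum_(0 <= j < K * m) g (j %/ m) = m * \sum_(0 <= k < K) g k.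
Proof.
move=> m0; elim: K => [|K IH]; first by rewrite mul0n !big_geq // muln0.
rewrite (big_cat_nat (n := K * m)) //=; last by rewrite mulSnr leq_addr.
rewrite IH big_nat_recr //= mulnDr; congr (_ + _).
rewrite mulSnr -{1}(add0n (K * m)) big_addn addKn big_nat_cond.
rewrite (eq_bigr (fun _ => g K)); last first.
  by move=> j /andP[/andP[_ hj] _]; rewrite divnDMl // divn_small ?add0n.
by rewrite -big_nat_cond sum_nat_const_nat subn0 mulnC.
Qed.

Lemma window a b n : \sum_(0 <= i < n) ((a <= i) && (i < b)) = minn n b - a.
Proof.
elim: n => [|n IH]; first by rewrite big_geq //; lia.
rewrite big_nat_recr //= IH.
case: (leqP a n) => /= h1; case: (ltnP n b) => /= h2; lia.
Qed.

Lemma sum_ge1 (F : nat -> nat) n i : i < n -> 0 < F i -> 0 < \sum_(0 <= j < n) F j.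
Proof.
move=> hi hF; rewrite big_mkord (bigD1 (Ordinal hi)) //=.
exact: leq_trans hF (leq_addr _ _).
Qed.

Definition bw m k : m.-tuple A := [tuple y (k * m + t) | t < m].
Definition Pbad m k : bool := Bp delta (bw m k).

Lemma bw_val m k : tval (bw m k) = [seq y (k * m + t) | t <- iota 0 m].
Proof.
rewrite /bw /= -val_enum_ord -map_comp.
by [].
Qed.

Lemma impure m i : 0 < m -> lab1 (rho i) = None -> ~~ Pbad m (jpos i %/ m) ->
  exists t, t < m /\ lab1 (rho (i - jpos i %% m + t)) != None.
Proof.
move=> m0 h0 nb.
set r := jpos i %% m; set i0 := i - r.
case: (boolP [exists t : 'I_m, lab1 (rho (i0 + t)) != None]) => [/existsP[t Ht]|Hn].
  by exists t.
exfalso; move/negP: nb; apply.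
have Hall : forall t, t < m -> lab1 (rho (i0 + t)) = None.
  move=> t ht; move/existsPn: Hn => /(_ (Ordinal ht)) /negPn /eqP; exact.
have rl : r < m by rewrite ltn_pmod.
have ri : r <= i by apply: leq_trans (leq_mod _ _) (clen_le _ _).
have [_ J1] := pure (fun t ht => Hall t (ltn_trans ht rl)).
have [S _] := pure Hall.
rewrite subnK // in J1.
have dv := divn_eq (jpos i) m.
have ej : jpos i0 = jpos i %/ m * m by rewrite -/r in dv; lia.
rewrite /Pbad /Bp; apply/existsP; exists (st i0).
by rewrite bw_val -ej.
Qed.

Lemma main_bound m N0 n : 0 < m ->
  (forall K, N0 <= K * m -> 2 * m * \sum_(0 <= k < K) Pbad m k <= K * m) ->
  N0 <= comp_len (@lab1 A Q) rho n -> 1 <= comp_len (@lab1 A Q) rho n ->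
  comp_len (@lab2 A Q) rho n <= (4 * m * m + 5 * m + 3) * comp_len (@lab1 A Q) rho n.
Proof.
move=> m0 HS HN u1.
set u := comp_len (@lab1 A Q) rho n.
set v := comp_len (@lab2 A Q) rho n.
have um : m <= m * u by rewrite leq_pmulr.
have umm : m * m <= m * m * u by rewrite leq_pmulr.
case: (ltnP v N0) => [vs|vl]; first by nia.
set Y1 := \sum_(0 <= i < n) ((lab1 (rho i) == None) && Pbad m (jpos i %/ m)).
set Y2 := \sum_(0 <= i < n) ((lab1 (rho i) == None) && ~~ Pbad m (jpos i %/ m)).
have h1 : v <= u + (Y1 + Y2).
  rewrite /v /u !clen_nat /Y1 /Y2 -!big_split /=; apply: leq_sum => i _.
  by case: (lab1 _); case: (lab2 _); case: Pbad.
have h3 : Y1 <= \sum_(0 <= j < v) Pbad m (j %/ m).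
  rewrite -(ident (fun j => Pbad m (j %/ m))); apply: leq_sum => i _.
  case E: (lab1 (rho i)) => [a|] //=.
  by rewrite (yonly_l2 E) mul1n.
set K := (v %/ m).+1.
have vK : v <= K * m by apply: ltnW; rewrite ltn_ceil.
have Kv : K * m <= v + m by rewrite mulSnr leq_add2r leq_trunc_div.
have h4 : \sum_(0 <= j < v) Pbad m (j %/ m) <= m * \sum_(0 <= k < K) Pbad m k.
  rewrite -block_sum // [X in _ <= X](big_cat_nat (n := v)) //=; exact: leq_addr.
have h5 := HS K (leq_trans vl vK).
have h6 : Y2 <= \sum_(0 <= i < n) \sum_(0 <= i' < n + m)
     (lab1 (rho i') != None) * ((i' + 1 - m <= i) && (i < i' + m)).
  rewrite /Y2 [X in X <= _]big_nat_cond [X in _ <= X]big_nat_cond.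
  apply: leq_sum => i /andP[/andP[_ hi] _].
  case: (boolP (lab1 (rho i) == None)) => //= /eqP E.
  case: (boolP (Pbad m (jpos i %/ m))) => //= nb.
  have [t [tm Ht]] := impure m0 E nb.
  have rl : jpos i %% m < m by rewrite ltn_pmod.
  have ri : jpos i %% m <= i by apply: leq_trans (leq_mod _ _) (clen_le _ _).
  apply: (sum_ge1 (i := i - jpos i %% m + t)); first by lia.
  rewrite Ht mul1n lt0b; apply/andP; split; apply/leP; lia.
have h7 : \sum_(0 <= i < n) \sum_(0 <= i' < n + m)
     (lab1 (rho i') != None) * ((i' + 1 - m <= i) && (i < i' + m))
     <= 2 * m * (u + m).
  rewrite exchange_big /=.
  apply: leq_trans (_ : \sum_(0 <= i' < n + m) (lab1 (rho i') != None) * (2 * m) <= _).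
    apply: leq_sum => i' _; rewrite -big_distrr /= window leq_mul2l; apply/orP; right; lia.
  rewrite -big_distrl /= -clen_nat mulnC leq_mul2l; apply/orP; right.
  exact: clen_add.
nia.
Qed.
End Run.
Module NB.
Import Order.TTheory GRing.Theory Num.Theory.

Lemma unif (T : finType) (P : T -> nat -> Prop) :
  (forall u, exists N0, forall N, N0 <= N -> P u N) -> exists N0, forall u N, N0 <= N -> P u N.
Proof.
move=> H.
suff [N0 HN] : exists N0, forall u, u \in enum T -> forall N, N0 <= N -> P u N.
  by exists N0 => u; apply: HN; rewrite mem_enum.
elim: (enum T) => [|u0 l [N0 HN]]; first by exists 0.
have [N1 H1] := H u0.
exists (maxn N0 N1) => u; rewrite inE => /orP[/eqP->|ul] N hN.
  by apply: H1; apply: leq_trans hN; apply: leq_maxr.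
by apply: HN => //; apply: leq_trans hN; apply: leq_maxl.
Qed.

Local Open Scope ring_scope.
Lemma nb_rat (A : finType) (y : nat -> A) m (u : m.-tuple A) : (0 < m)%N -> (0 < #|A|)%N -> normal y ->
  exists N0, forall N, (N0 <= N)%N -> (block_count y u N * m * #|A| ^ m <= 2 * N)%N.
Proof.
move=> m0 A0 Hn.
have p0 : (0 : rat) < (#|A|%:R ^+ m)^-1 by rewrite invr_gt0 exprn_gt0 // ltr0n.
have [N0 HN] := Hn m u m0 _ p0.
exists N0 => N hN.
case: (posnP N) => [->|N0p]; first by rewrite /block_count div0n big_ord0.
have := HN N hN.
set c := block_count y u N; set p := (#|A|%:R ^+ m)^-1 : rat.
set x := (c%:R / (N%:R / m%:R)) : rat.
move=> h.
have hx : x < p + p by have := ler_norm (x - p); lra.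
have Lm0 : (0 : rat) < #|A|%:R ^+ m by rewrite exprn_gt0 // ltr0n.
have NL0 : (0 : rat) < N%:R * #|A|%:R ^+ m by rewrite mulr_gt0 // ltr0n.
have e1 : (c * m * #|A| ^ m)%:R = x * (N%:R * #|A|%:R ^+ m) :> rat.
  rewrite /x !natrM natrX; field.
  by apply/andP; split; rewrite pnatr_eq0 -lt0n.
have e2 : (p + p) * (N%:R * #|A|%:R ^+ m) = (2 * N)%:R :> rat.
  rewrite /p natrM; field.
  by rewrite expf_neq0 // pnatr_eq0 -lt0n.
have : (c * m * #|A| ^ m)%:R < (2 * N)%:R :> rat.
  by rewrite e1 -e2 ltr_pM2r.
by rewrite ltr_nat => /ltnW.
Qed.
Local Close Scope ring_scope.
End NB.
Import NB.

Theorem lemma18 (A Q : finType) (delta : {set trans A Q}) (I : {set Q}) :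
  two_deterministic delta I -> no_double_eps delta ->
  exists K : nat,
    forall (rho : nat -> trans A Q) (x y z : nat -> A),
      accepting_run delta I rho x y z -> normal y ->
      exists N : nat, forall n : nat,
        (N <= comp_len (@lab1 A Q) rho n)%N ->
        (comp_len (@lab2 A Q) rho n <= K * comp_len (@lab1 A Q) rho n)%N.
Proof.
move=> [_ det] nde.
have [D HD] := exD delta.
set P := D.+1; set L := #|A|; set r0 := L ^ P.
set k := 4 * #|Q| * (r0 - 1).
set m := k.+1 * P.
exists (4 * m * m + 5 * m + 3).
move=> rho x y z [Hrun [_ [[_ Hxu] [[Hy _] _]]]] Hnorm.
have A0 : 0 < L by apply/card_gt0P; exists (y 0).
have m0 : 0 < m by rewrite /m muln_gt0.
have r00 : 0 < r0 by rewrite expn_gt0 A0.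
have Bc : 4 * \sum_(u : m.-tuple A) (Bp delta u : nat) <= L ^ m.
  apply: leq_trans (_ : 4 * \sum_(q : Q) f delta m q <= _).
    by rewrite leq_mul2l Bp_card orbT.
  apply: leq_trans (_ : 4 * \sum_(q : Q) (r0 - 1) ^ k.+1 <= _).
    by rewrite leq_mul2l; apply/orP; right; apply: leq_sum => q _; apply: f_pow.
  have eLm : L ^ m = r0 ^ k.+1 by rewrite /m mulnC expnM.
  have hb := bern (r0 - 1) k.
  rewrite (subnK r00) in hb.
  rewrite sum_nat_const cardT -cardE eLm expnSr.
  move: hb; move: ((r0 - 1) ^ k) (r0 ^ k.+1) => X R; rewrite /k; move: (r0 - 1) => s.
  move=> h; apply: leq_trans h.
  have -> : 4 * (#|Q| * (X * s)) = X * (4 * #|Q| * s) by ring.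
  rewrite leq_mul2l; apply/orP; right; lia.
have nb : forall u : m.-tuple A, exists N0, forall N, N0 <= N ->
    block_count y u N * m * L ^ m <= 2 * N.
  by move=> u; apply: nb_rat.
have [N0 HN0] := unif nb.
exists (maxn N0 1) => n hn.
apply: (main_bound det nde Hrun Hy Hxu (N0 := N0) m0); last 2 first.
- exact: leq_trans (leq_maxl _ _) hn.
- exact: leq_trans (leq_maxr _ _) hn.
move=> K HK.
set S := \sum_(u : m.-tuple A) (Bp delta u : nat) * block_count y u (K * m).
have h1 : \sum_(0 <= k0 < K) Pbad delta y m k0 <= S.
  rewrite /S big_mkord.
  rewrite (eq_bigr (fun u : m.-tuple A => \sum_(k0 < K) (Bp delta u : nat) *
      [forall j : 'I_m, y (k0 * m + j) == tnth u j])); last first.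
    by move=> u _; rewrite /block_count mulnK // big_distrr.
  rewrite exchange_big /=; apply: leq_sum => k0 _.
  case E: (Pbad delta y m k0) => //.
  rewrite (bigD1 (bw y m k0)) //=.
  have -> : Bp delta (bw y m k0) by exact: E.
  have -> : [forall j : 'I_m, y (k0 * m + j) == tnth (bw y m k0) j].
    by apply/forallP => j; rewrite /bw tnth_mktuple.
  by [].
have h2 : S * (m * L ^ m) <= 2 * (K * m) * \sum_(u : m.-tuple A) (Bp delta u : nat).
  rewrite /S big_distrl big_distrr /=; apply: leq_sum => u _.
  case: (Bp delta u); last by rewrite !mul0n muln0.
  by rewrite mul1n muln1 mulnA; apply: HN0.
have Lm : 0 < L ^ m by rewrite expn_gt0 A0.
have h3 : 2 * m * S * L ^ m <= K * m * L ^ m.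
  move: h2 Bc; move: (\sum_(u : m.-tuple A) (Bp delta u : nat)) => B.
  move: (L ^ m) => Lm'; nia.
have h4 : 2 * m * S <= K * m by rewrite -(leq_pmul2r Lm).
apply: leq_trans h4; rewrite leq_mul2l h1 orbT //.
Qed.
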